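(* Let $\mu\in\mathbb P^\vee$ and let $V$ be a top graded $Y_\mu(\mathfrak g)$-module. Then $V$ is of co-highest $\ell$-weight if and only if its top weight space equals the subspace $\{v\in V: x^+_{i,n}v=0 \text{ for all } (i,n)\in I\times\mathbb N\}$.
   Context: Let $\mathfrak g$ be a finite-dimensional complex simple Lie algebra with Cartan subalgebra $\mathfrak h$, Dynkin nodes $I$, simple roots $\alpha_i$, invariant form $(\,,\,)$ on $\mathfrak h^*$ with $d_i=(\alpha_i,\alpha_i)/2$ coprime positive integers, $c_{ij}=2(\alpha_i,\alpha_j)/(\alpha_i,\alpha_i)$, $d_{ij}=(\alpha_i,\alpha_j)/2$, fundamental coweights $\varpi_i^\vee$ ($\langle\varpi_i^\vee,\alpha_j\rangle=\delta_{ij}$), $\mathbb P^\vee=\bigoplus\mathbb Z\varpi_i^\vee$, $\mathbb Q_-=-\bigoplus\mathbb N\alpha_i$. For $\mu\in\mathbb P^\vee$, $Y_\mu(\mathfrak g)$ is the algebra generated by $x^\pm_{i,n},\xi_{i,p}$ ($i\in I,n\in\mathbb N,p\in\mathbb Z$) with relations $[\xi_{i,p},\xi_{j,q}]=0$, $[x^+_{i,m},x^-_{j,n}]=\delta_{ij}\xi_{i,m+n}$, $[\xi_{i,p+1},x^\pm_{j,n}]-[\xi_{i,p},x^\pm_{j,n+1}]=\pm d_{ij}(\xi_{i,p}x^\pm_{j,n}+x^\pm_{j,n}\xi_{i,p})$, $[x^\pm_{i,m+1},x^\pm_{j,n}]-[x^\pm_{i,m},x^\pm_{j,n+1}]=\pm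 d_{ij}(x^\pm_{i,m}x^\pm_{j,n}+x^\pm_{j,n}x^\pm_{i,m})$, $\mathrm{ad}_{x^\pm_{i,0}}^{1-c_{ij}}(x^\pm_{j,0})=0$ ($i\ne j$), $\xi_{i,-\langle\mu,\alpha_i\rangle-1}=1$, $\xi_{i,p}=0$ for $p<-\langle\mu,\alpha_i\rangle-1$. For a $Y_\mu(\mathfrak g)$-module $V$ and $\beta\in\mathfrak h^*$, the weight space is $V_\beta=\{v: \xi_{i,-\langle\mu,\alpha_i\rangle}v=(\alpha_i,\beta)v\ \forall i\}$; $V$ is a weight module if it is the direct sum of its weight spaces. $V$ is top graded if it is a weight module and there is $\lambda\in\mathfrak h^*$ with all weights in $\lambda+\mathbb Q_-$ and $\dim V_\lambda=1$; $V_\lambda$ is the top weight space. $V$ is of co-highest $\ell$-weight if it is top graded and its top weight space is contained in every nonzero submodule of $V$. *)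

(* Defs.v *)
From HB Require Import structures.
From mathcomp Require Import all_boot all_order all_algebra complex reals.
Set Implicit Arguments.
Unset Strict Implicit.
Unset Printing Implicit Defensive.
Import Order.TTheory GRing.Theory Num.Theory.
Local Open Scope ring_scope.

(* Dynkin nodes: a finite type I.  B i j = (alpha_i, alpha_j) (integer  *)
(* valued invariant form on the root lattice), d i = (alpha_i,alpha_i)/2. *)
Definition simple_cartan_datum (I : finType) (d : I -> nat)
    (B : I -> I -> int) : Prop :=
  [/\ (0 < #|I|)%N,
      (forall i, (0 < d i)%N),
      (\big[gcdn/0%N]_(i : I) d i = 1)%N &
      (forall i j, B i j = B j i)] /\ [/\
      (forall i, B i i = (2 * d i)%N%:Z),
      (forall i j, i != j -> B i j <= 0 /\ ((d i)%:Z %| B i j)%Z),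
      (forall x : I -> rat, (exists i, x i != 0) ->
         0 < \sum_(i : I) \sum_(j : I) x i * (B i j)%:~R * x j) &
      (forall S : {set I}, (forall i j, i \in S -> j \notin S -> B i j = 0) ->
         S = set0 \/ S = setT)].

(* Cartan matrix entry c_ij = 2 (a_i,a_j)/(a_i,a_i) = B i j / d i. *)
Definition cartan (I : finType) (d : I -> nat) (B : I -> I -> int) (i j : I)
  : int := (B i j %/ (d i)%:Z)%Z.

Definition dij (C : fieldType) (I : finType) (B : I -> I -> int) (i j : I) : C :=
  (B i j)%:~R / 2.

Section Ymu.
Variables (C : fieldType) (V : lmodType C).

Definition comm (f g : V -> V) : V -> V := fun v => f (g v) - g (f v).
Definition acomm (f g : V -> V) : V -> V := fun v => f (g v) + g (f v).

(* V is a Y_mu(g)-module: xp, xm, xi are the actions of the generators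
   x^+_{i,n}, x^-_{i,n}, xi_{i,p}; m i = <mu, alpha_i>. *)
Definition Ymu_module (I : finType) (d : I -> nat) (B : I -> I -> int)
    (m : I -> int)
    (xp xm : I -> nat -> {linear V -> V}) (xi : I -> int -> {linear V -> V})
  : Prop :=
  [/\ (forall i j p q v, xi i p (xi j q v) = xi j q (xi i p v)) &
      (forall i j a b v, comm (xp i a) (xm j b) v =
                         if i == j then xi i (a + b)%N%:Z v else 0)] /\ [/\
      (forall i j p n v,
         comm (xi i (p + 1)) (xp j n) v - comm (xi i p) (xp j n.+1) v
         = dij C B i j *: acomm (xi i p) (xp j n) v) &
      (forall i j p n v,
         comm (xi i (p + 1)) (xm j n) v - comm (xi i p) (xm j n.+1) v
         = - (dij C B i j *: acomm (xi i p) (xm j n) v))] /\ [/\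
      (forall i j a b v,
         comm (xp i a.+1) (xp j b) v - comm (xp i a) (xp j b.+1) v
         = dij C B i j *: acomm (xp i a) (xp j b) v),
      (forall i j a b v,
         comm (xm i a.+1) (xm j b) v - comm (xm i a) (xm j b.+1) v
         = - (dij C B i j *: acomm (xm i a) (xm j b) v)),
      (forall i j v, i != j ->
         iter `|1 - cartan d B i j|%N (comm (xp i 0%N)) (xp j 0%N) v = 0 /\
         iter `|1 - cartan d B i j|%N (comm (xm i 0%N)) (xm j 0%N) v = 0) &
      (forall i v, xi i (- m i - 1) v = v /\
         forall p, p < - m i - 1 -> xi i p v = 0)].

(* Weights beta in h^* are written in coordinates on the basis of simple
   roots: beta = sum_j b j alpha_j, so (alpha_i, beta) = sum_j B i j b j. *)
Definition pairing (I : finType) (B : I -> I -> int) (i : I) (b : I -> C) : C :=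
  \sum_(j : I) (B i j)%:~R * b j.

Definition wspace (I : finType) (B : I -> I -> int) (m : I -> int)
    (xi : I -> int -> {linear V -> V}) (b : I -> C) (v : V) : Prop :=
  forall i, xi i (- m i) v = pairing B i b *: v.

Definition is_weight (I : finType) (B : I -> I -> int) (m : I -> int)
    (xi : I -> int -> {linear V -> V}) (b : I -> C) : Prop :=
  exists2 v, v != 0 & wspace B m xi b v.

Definition weight_module (I : finType) (B : I -> I -> int) (m : I -> int)
    (xi : I -> int -> {linear V -> V}) : Prop :=
  forall v : V, exists s : seq ((I -> C) * V),
    foldr (fun p P => wspace B m xi p.1 p.2 /\ P) True s /\
    v = \sum_(p <- s) p.2.

Definition top_graded_at (I : finType) (B : I -> I -> int) (m : I -> int)
    (xi : I -> int -> {linear V -> V}) (lam : I -> C) : Prop :=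
  [/\ weight_module B m xi,
      (forall b, is_weight B m xi b ->
         exists n : I -> nat, forall j, b j = lam j - (n j)%:R) &
      (exists2 u, u != 0 /\ wspace B m xi lam u &
        forall v, wspace B m xi lam v -> exists c : C, v = c *: u)].

Definition top_graded (I : finType) (B : I -> I -> int) (m : I -> int)
    (xi : I -> int -> {linear V -> V}) : Prop :=
  exists lam, top_graded_at B m xi lam.

Definition submodule (I : finType)
    (xp xm : I -> nat -> {linear V -> V}) (xi : I -> int -> {linear V -> V})
    (W : V -> Prop) : Prop :=
  [/\ W 0, (forall u v, W u -> W v -> W (u + v)),
      (forall (c : C) v, W v -> W (c *: v)) &
      (forall v, W v -> (forall i n, W (xp i n v) /\ W (xm i n v)) /\
                        (forall i p, W (xi i p v)))].

Definition co_highest_lweight (I : finType) (B : I -> I -> int) (m : I -> int)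
    (xp xm : I -> nat -> {linear V -> V}) (xi : I -> int -> {linear V -> V})
  : Prop :=
  exists lam, top_graded_at B m xi lam /\
    forall W, submodule xp xm xi W -> (exists2 w, w != 0 & W w) ->
      forall v, wspace B m xi lam v -> W v.

End Ymu.

(* Main.v *)
Require Import Defs.
From HB Require Import structures.
From mathcomp Require Import all_boot all_order all_algebra complex reals.
From mathcomp Require Import ring.
From Stdlib Require Import Classical.
Import Order.TTheory GRing.Theory Num.Theory.
Local Open Scope ring_scope.
Set Implicit Arguments. Unset Strict Implicit.

Section Gen.
Variables (C : numFieldType) (V : lmodType C) (I : finType) (B : I -> I -> int)
  (m : I -> int) (xp xm : I -> nat -> {linear V -> V}) (xi : I -> int -> {linear V -> V}).

Hypothesis Hxixi : forall i j p q v, xi i p (xi j q v) = xi j q (xi i p v).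
Hypothesis Hxip : forall i j p n v,
         comm (xi i (p + 1)) (xp j n) v - comm (xi i p) (xp j n.+1) v
         = dij C B i j *: acomm (xi i p) (xp j n) v.
Hypothesis Hxim : forall i j p n v,
         comm (xi i (p + 1)) (xm j n) v - comm (xi i p) (xm j n.+1) v
         = - (dij C B i j *: acomm (xi i p) (xm j n) v).
Hypothesis Hnorm : forall i v, xi i (- m i - 1) v = v /\
         forall p, p < - m i - 1 -> xi i p v = 0.

Lemma wspace_pair (b b' : I -> C) v : (forall i, pairing B i b = pairing B i b') ->
  wspace B m xi b v -> wspace B m xi b' v.
Proof. by move=> e H i; rewrite H e. Qed.

Lemma dij2 i j (x : V) : dij C B i j *: (x + x) = (B i j)%:~R *: x.
Proof.
rewrite /dij -mulr2n -scaler_nat scalerA divfK //.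
by rewrite pnatr_eq0.
Qed.
Arguments dij2 : clear implicits.

Lemma shift_up j n (b b' : I -> C) v :
  (forall i, pairing B i b' = pairing B i b + (B i j)%:~R) ->
  wspace B m xi b v -> wspace B m xi b' (xp j n v).
Proof.
move=> e Hv i.
have := Hxip i j (- m i - 1) n v.
rewrite /comm /acomm subrK !(proj1 (Hnorm i _)) subrr subr0 dij2 Hv linearZ /=.
move/eqP; rewrite subr_eq => /eqP ->.
by rewrite e scalerDl addrC.
Qed.

Lemma shift_down j n (b b' : I -> C) v :
  (forall i, pairing B i b' = pairing B i b - (B i j)%:~R) ->
  wspace B m xi b v -> wspace B m xi b' (xm j n v).
Proof.
move=> e Hv i.
have := Hxim i j (- m i - 1) n v.
rewrite /comm /acomm subrK !(proj1 (Hnorm i _)) subrr subr0 dij2 Hv linearZ /=.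
move/eqP; rewrite subr_eq => /eqP ->.
rewrite e scalerBl; set y := (_ *: xm j n v); set z := (_ *: xm j n v) in y *; by rewrite addrC.
Qed.

Lemma xi_pres p k (b : I -> C) v : wspace B m xi b v -> wspace B m xi b (xi k p v).
Proof. by move=> Hv i; rewrite Hxixi Hv linearZ. Qed.

Hypothesis Hpm : forall i j a b v, comm (xp i a) (xm j b) v =
                         if i == j then xi i (a + b)%N%:Z v else 0.

Inductive Sgen (w : V) : V -> Prop :=
| Sg_base : Sgen w w
| Sg0 : Sgen w 0
| SgD u v : Sgen w u -> Sgen w v -> Sgen w (u+v)
| SgZ (c : C) u : Sgen w u -> Sgen w (c *: u)
| SgM i n u : Sgen w u -> Sgen w (xm i n u)
| SgX i p u : Sgen w u -> Sgen w (xi i p u).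

Lemma SgN w u : Sgen w u -> Sgen w (- u).
Proof. by move=> H; rewrite -scaleN1r; apply: SgZ. Qed.
Lemma SgB w u v : Sgen w u -> Sgen w v -> Sgen w (u - v).
Proof. by move=> H1 H2; apply: SgD => //; apply: SgN. Qed.

Lemma solveB (A B' Y E : V) : A - B' - Y = E -> B' = A - Y - E.
Proof. by move <-; rewrite [A - B' - Y]addrAC subKr. Qed.

Lemma Sgen_xp w : (forall i n, xp i n w = 0) ->
  forall u, Sgen w u -> forall j n, Sgen w (xp j n u).
Proof.
move=> Hw u; elim=> {u}.
- by move=> j n; rewrite Hw; apply: Sg0.
- by move=> j n; rewrite linear0; apply: Sg0.
- by move=> u v _ IHu _ IHv j n; rewrite linearD; apply: SgD; [apply: IHu|apply: IHv].
- by move=> c u _ IH j n; rewrite linearZ; apply: SgZ; apply: IH.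
- move=> i b u Hu IH j n.
  have := Hpm j i n b u; rewrite /comm => /eqP; rewrite subr_eq => /eqP ->.
  apply: SgD; last by apply: SgM.
  by case: eqP => _; [apply: SgX | apply: Sg0].
- move=> i p u Hu IH j n.
  have Hk : forall k n, Sgen w (xp j n (xi i (- m i - 1 + k%:Z) u)).
    elim=> [|k IHk] n'.
      by rewrite addr0 (proj1 (Hnorm i _)).
    have := Hxip i j (- m i - 1 + k%:Z) n' u.
    have -> : - m i - 1 + k%:Z + 1 = - m i - 1 + k.+1%:Z.
      by rewrite -addrA -[k.+1]addn1 PoszD.
    rewrite /comm /acomm => /solveB ->.
    apply: SgB; last by apply: SgZ; apply: SgD; [apply: SgX; apply: IH | apply: IHk].
    apply: SgB; first by apply: SgX; apply: IH.
    by apply: SgB; [apply: SgX; apply: IH | apply: IHk].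
  case: (ltrP p (- m i - 1)) => hp.
    by rewrite (proj2 (Hnorm i _)) // linear0; apply: Sg0.
  have -> : p = - m i - 1 + Posz (absz (p - (- m i - 1))%R).
    by rewrite gez0_abs ?subr_ge0 // addrC subrK.
  by apply: Hk.
Qed.


Fixpoint InL {A : Type} (a : A) (s : seq A) : Prop :=
  if s is b :: s' then b = a \/ InL a s' else False.

Lemma sum_ext (A : Type) (s : seq A) (F G : A -> V) :
  (forall p, InL p s -> F p = G p) -> \sum_(p <- s) F p = \sum_(p <- s) G p.
Proof.
elim: s => [|a s IH] H; first by rewrite !big_nil.
rewrite !big_cons H /=; last by left.
by rewrite IH // => p Hp; apply: H; right.
Qed.

Lemma foldr_In (A : Type) (Q : A -> Prop) (s : seq A) :
  foldr (fun p P => Q p /\ P) True s <-> (forall p, InL p s -> Q p).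
Proof.
elim: s => [|a s IH] /=; first by split.
split.
  by case=> Ha /IH Hs p [<-|/Hs].
by move=> H; split; [apply: H; left | apply/IH => p Hp; apply: H; right].
Qed.

Lemma wspaceZ b (k : C) v : wspace B m xi b v -> wspace B m xi b (k *: v).
Proof. by move=> H i; rewrite linearZ /= H !scalerA mulrC. Qed.

Lemma wspaceD b u v : wspace B m xi b u -> wspace B m xi b v -> wspace B m xi b (u + v).
Proof. by move=> Hu Hv i; rewrite linearD /= Hu Hv scalerDr. Qed.

Lemma wspace_sum b (s : seq ((I -> C) * V)) :
  (forall p, InL p s -> wspace B m xi b p.2) -> wspace B m xi b (\sum_(p <- s) p.2).
Proof.
elim: s => [|a s IH] H; first by rewrite big_nil => i; rewrite linear0 scaler0.
rewrite big_cons; apply: wspaceD; first by apply: H; left.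
by apply: IH => p Hp; apply: H; right.
Qed.

Lemma indep (c : I -> C) (s : seq ((I -> C) * V)) :
  (forall p, InL p s -> wspace B m xi p.1 p.2 /\
       exists i, pairing B i p.1 != pairing B i c) ->
  wspace B m xi c (\sum_(p <- s) p.2) -> \sum_(p <- s) p.2 = 0.
Proof.
move: {2}(size s) (erefl (size s)) => n; elim: n s => [|n IH] s.
  by case: s => // _ _ _; rewrite big_nil.
case: s => [|[b x] t] //= [st] H Hu.
have [Hx [i Hi]] := H (b, x) (or_introl erefl).
have Ht : forall p, InL p t -> wspace B m xi p.1 p.2 /\
       exists i, pairing B i p.1 != pairing B i c.
  by move=> p Hp; apply: H; right.
rewrite big_cons /= in Hu *.
set u := x + _ in Hu *.
set cb := pairing B i b; set cc := pairing B i c.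
have Hne : cc - cb != 0 by rewrite subr_eq0 eq_sym.
pose t' := [seq (p.1, ((pairing B i p.1 - cb) / (cc - cb)) *: p.2) | p <- t].
have Eu : u = \sum_(p <- t') p.2.
  have E1 : (cc - cb) *: u = \sum_(p <- t) (pairing B i p.1 - cb) *: p.2.
    rewrite scalerBl -Hu /u linearD /= Hx big_endo ?linear0 //; last exact: linearD.
    rewrite scalerDr [cb *: _ + _]addrC opprD addrA addrK.
    rewrite scaler_sumr.
    rewrite -sumrB; apply: sum_ext => p Hp.
    have [Hp1 _] := Ht p Hp.
    by rewrite Hp1 scalerBl.
  rewrite big_map /=.
  rewrite -[u]scale1r -(mulVf Hne) -scalerA E1 scaler_sumr.
  by apply: sum_ext => p _; rewrite scalerA mulrC.
rewrite Eu; apply: IH; first by rewrite size_map.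
  move=> p; rewrite /t'; clear Eu Hu u t'; move: Ht; clear st H; elim: t => [|q t IHt] //= Ht.
  case=> [<-|Hp]; last by apply: IHt => // r Hr; apply: Ht; right.
  have [Hq1 Hq2] := Ht q (or_introl erefl).
  by split => //=; apply: wspaceZ.
by rewrite -Eu.
Qed.


Lemma pairing_shift (b b' : I -> C) j (a : C) :
  (forall j', b' j' = b j' + a * (j' == j)%:R) ->
  forall k, pairing B k b' = pairing B k b + (B k j)%:~R * a.
Proof.
move=> e k; rewrite /pairing.
under eq_bigr do rewrite e mulrDr.
rewrite big_split /=; congr (_ + _).
rewrite (bigD1 j) //= eqxx mulr1 big1 ?addr0 // => j' /negPf ->.
by rewrite mulr0 mulr0.
Qed.

Lemma intr_pairing (R' : numDomainType) k (n : I -> nat) :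
  ((\sum_(j : I) B k j * (n j)%:Z)%:~R : R') = \sum_(j : I) (B k j)%:~R * (n j)%:R.
Proof.
rewrite rmorph_sum; apply: eq_bigr => j _.
by rewrite rmorphM /= -pmulrn.
Qed.

Lemma posdef_nat (n : I -> nat) :
  (forall x : I -> rat, (exists i, x i != 0) ->
         0 < \sum_(i : I) \sum_(j : I) x i * (B i j)%:~R * x j) ->
  (forall k, pairing B k (fun j => ((n j)%:R : C)) = 0) -> forall j, n j = 0%N.
Proof.
move=> Hpd Hp j; apply/eqP; apply: contraT => Hj.
have Hz : forall k, (\sum_(j : I) B k j * (n j)%:Z) = 0.
  move=> k; apply/eqP; rewrite -(intr_eq0 C) intr_pairing.
  by have := Hp k; rewrite /pairing => ->.
have := Hpd (fun j => (n j)%:R) _.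
have -> : \sum_(i : I) \sum_(j0 : I) ((n i)%:R : rat) * (B i j0)%:~R * (n j0)%:R = 0.
  rewrite big1 // => i _.
  under eq_bigr do rewrite -mulrA.
  by rewrite -mulr_sumr -intr_pairing Hz mulr0.
rewrite ltxx; apply; exists j; by rewrite pnatr_eq0.
Qed.

Definition lamn (lam : I -> C) (n : I -> nat) := fun j => lam j - (n j)%:R.

Definition Good (lam : I -> C) (u : V) := exists s : seq ((I -> nat) * V),
  (forall p, InL p s -> wspace B m xi (lamn lam p.1) p.2 /\ exists j, p.1 j != 0%N)
  /\ u = \sum_(p <- s) p.2.

Lemma InL_cat (A : Type) (p : A) s1 s2 : InL p (s1 ++ s2) -> InL p s1 \/ InL p s2.
Proof. elim: s1 => [|a s1 IH] /=; [by right | by case=> [->|/IH[]]; auto]. Qed.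

Lemma InL_map (A A' : Type) (f : A -> A') (p : A') s : InL p (map f s) -> exists2 q, InL q s & p = f q.
Proof.
induction s as [|a s IH]; first by [].
case=> H.
  by exists a; [left | rewrite H].
by have [q Hq ->] := IH H; exists q; [right|].
Qed.

Lemma InL_filter (A : Type) (P : pred A) (p : A) s : InL p (filter P s) -> InL p s /\ P p.
Proof. elim: s => [|a s IH] //=; case: ifP => Pa /=; [case=> [<-|/IH[]] | move/IH => []]; auto. Qed.

Lemma Good0 lam : Good lam 0.
Proof. by exists [::]; split => //; rewrite big_nil. Qed.

Lemma GoodD lam u v : Good lam u -> Good lam v -> Good lam (u + v).
Proof.
move=> [s1 [H1 ->]] [s2 [H2 ->]]; exists (s1 ++ s2); split; last by rewrite big_cat.
by move=> p Hp; case: (InL_cat Hp) => Hq; [apply: H1|apply: H2].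
Qed.

Lemma Good_map lam (f : V -> V) (g : (I -> nat) -> (I -> nat)) u :
  (forall n, (exists j, n j != 0%N) -> exists j, g n j != 0%N) ->
  (forall n x, wspace B m xi (lamn lam n) x -> wspace B m xi (lamn lam (g n)) (f x)) ->
  {morph f : x y / x + y} -> f 0 = 0 ->
  Good lam u -> Good lam (f u).
Proof.
move=> Hg Hf fD f0 [s [Hs ->]]; exists [seq (g p.1, f p.2) | p <- s]; split.
  move=> p Hp; have [q Hq ->] := InL_map Hp; have [Hq1 Hq2] := Hs q Hq; split; [exact: Hf | exact: Hg].
by rewrite big_map (big_morph f fD f0).
Qed.

Lemma Good_Sgen lam w : Good lam w -> forall u, Sgen w u -> Good lam u.
Proof.
move=> Hw u; elim=> {u} //.
- exact: Good0.
- by move=> u v _ Hu _ Hv; apply: GoodD.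
- move=> c u _ Hu; apply: (Good_map (f := fun x => c *: x) (g := id)) => //; first by move=> n x Hx; apply: wspaceZ.
    by move=> x y; rewrite scalerDr.
  by rewrite scaler0.
- move=> i n u _ Hu.
  apply: (Good_map (f := xm i n) (g := fun n' j => (n' j + (j == i))%N)) => //.
  + by move=> n' [j Hj]; exists j; rewrite addn_eq0 negb_and Hj.
  + move=> n' x Hx; eapply shift_down; last exact Hx.
    move=> k; rewrite (@pairing_shift (lamn lam n') _ i (-1)).
      by rewrite mulrN1.
    by move=> j; rewrite /lamn natrD opprD addrA mulN1r.
  + exact: linearD.
  + exact: linear0.
- move=> i p u _ Hu; apply: (Good_map (f := xi i p) (g := id)) => //.
  + by move=> n' x Hx; apply: xi_pres.
  + exact: linearD.
  + exact: linear0.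
Qed.


Section Top.
Variable lam : I -> C.
Hypothesis Hbound : forall b, is_weight B m xi b ->
         exists n : I -> nat, forall j, b j = lam j - (n j)%:R.

Lemma topB v j n : wspace B m xi lam v -> xp j n v = 0.
Proof.
move=> Hv; apply/eqP; apply: contraT => Hne.
have Hw : wspace B m xi (fun k => lam k + 1 * (k == j)%:R) (xp j n v).
  eapply shift_up; last exact Hv.
  by move=> k; rewrite (@pairing_shift lam _ j 1) // mulr1.
have [n' Hn'] := Hbound (ex_intro2 _ _ (xp j n v) Hne Hw).
have := Hn' j; rewrite eqxx mul1r => /(congr1 (fun z => z - lam j)).
rewrite [lam j + 1]addrC addrK [lam j - _]addrC addrK => H.
have H2 : (n' j)%:R + 1 = 0 :> C by rewrite [X in _ + X]H subrr.
by move: H2; rewrite natr1 => /eqP; rewrite pnatr_eq0.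
Qed.

Lemma pairingB k (a b : I -> C) :
  pairing B k (fun j => a j - b j) = pairing B k a - pairing B k b.
Proof. by rewrite /pairing -sumrB; apply: eq_bigr => j _; rewrite mulrBr. Qed.

Hypothesis Hpd : forall x : I -> rat, (exists i, x i != 0) ->
         0 < \sum_(i : I) \sum_(j : I) x i * (B i j)%:~R * x j.

Lemma dir1 (Hwm : weight_module B m xi) u0 (Hu0 : u0 != 0)
  (Hu0w : wspace B m xi lam u0)
  (Hco : forall W, submodule xp xm xi W -> (exists2 w, w != 0 & W w) ->
      forall v, wspace B m xi lam v -> W v) v :
  (forall i n, xp i n v = 0) -> wspace B m xi lam v.
Proof.
move=> Hv.
have [s [Hs Ev]] := Hwm v.
move/foldr_In: Hs => Hs.
pose P (p : (I -> C) * V) := [forall k, pairing B k p.1 == pairing B k lam].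
pose Q (p : (I -> C) * V) := ~~ P p && (p.2 != 0).
have E : v = \sum_(p <- s | P p) p.2 + \sum_(p <- s | Q p) p.2.
  rewrite Ev (bigID P) /=; congr (_ + _).
  rewrite (bigID (fun p => p.2 != 0)) /= [X in _ + X]big1 ?addr0 //.
  by move=> p /andP[_] /negPn /eqP.
have H1 : wspace B m xi lam (\sum_(p <- s | P p) p.2).
  rewrite -big_filter; apply: wspace_sum => p Hp'; have [Hp HP] := InL_filter Hp'.
  apply: wspace_pair (Hs p Hp) => k.
  by move/forallP: HP => /(_ k) /eqP.
set v' := \sum_(p <- s | Q p) p.2 in E.
have Hv' : forall i n, xp i n v' = 0.
  move=> i n; have := Hv i n; rewrite E linearD /= (topB i n H1) add0r //.
case: (eqVneq v' 0) => Hne; first by rewrite E Hne addr0.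
have Hsub : submodule xp xm xi (Sgen v').
  split.
  - exact: Sg0.
  - by move=> u w; apply: SgD.
  - by move=> c u; apply: SgZ.
  - move=> u Hu; split; last by move=> i p; apply: SgX.
    by move=> i n; split; [apply: Sgen_xp | apply: SgM].
have Hu0S := Hco _ Hsub (ex_intro2 _ _ v' Hne (Sg_base _)) u0 Hu0w.
have HG : Good lam v'.
  rewrite /v' -big_filter.
  have : forall p, InL p [seq p <- s | Q p] -> wspace B m xi p.1 p.2 /\ Q p.
    by move=> p Hp'; have [Hp HQ] := InL_filter Hp'; split => //; apply: Hs.
  elim: [seq p <- s | Q p] => [|[b x] t IH] Ht; first by rewrite big_nil; apply: Good0.
  rewrite big_cons; apply: GoodD; last by apply: IH => p Hp; apply: Ht; right.
  have [Hx /andP [HnP Hx0]] := Ht (b, x) (or_introl erefl).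
  have [n Hn] := Hbound (ex_intro2 _ _ x Hx0 Hx).
  exists [:: (n, x)]; split; last by rewrite big_cons big_nil addr0.
  move=> p [<-|//] /=; split.
    by apply: wspace_pair Hx => k; apply: eq_bigr => j _; rewrite Hn.
  apply/existsP; apply: contraNT HnP; rewrite negb_exists => /forallP Hz.
  apply/forallP => k; apply/eqP; apply: eq_bigr => j _; rewrite Hn.
  have -> : n j = 0%N by apply/eqP; move/negPn: (Hz j).
  by rewrite subr0.
have [s' [Hs' Eu]] := Good_Sgen HG Hu0S.
exfalso; move/negP: Hu0; apply; apply/eqP.
rewrite Eu -(big_map (fun p => (lamn lam p.1, p.2)) xpredT (fun p => p.2)).
apply: (indep (c := lam)); last by rewrite big_map -Eu.
move=> p Hp; have [q Hq ->] := InL_map Hp; have [Hq1 Hq2] := Hs' q Hq; split => //.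
apply/existsP; apply: contraT; rewrite negb_exists => /forallP Hall.
have [j Hj] := Hq2; suff : q.1 j = 0%N by move/eqP; rewrite (negbTE Hj).
apply: (posdef_nat Hpd) => k.
have := Hall k; rewrite negbK /lamn pairingB => /eqP.
by move/(congr1 (fun z => pairing B k lam - z)); rewrite subKr subrr.
Qed.

End Top.


Definition app (X : seq (I * nat)) (u : V) := foldr (fun p u => xp p.1 p.2 u) u X.
Definition cnt (X : seq (I * nat)) j := count (fun p : I * nat => p.1 == j) X.

Lemma appD X u v : app X (u + v) = app X u + app X v.
Proof. by elim: X => [|p X IH] //=; rewrite IH linearD. Qed.
Lemma app0 X : app X 0 = 0.
Proof. by elim: X => [|p X IH] //=; rewrite IH linear0. Qed.

Lemma app_weight X (b : I -> C) u : wspace B m xi b u ->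
  wspace B m xi (fun j => b j + (cnt X j)%:R) (app X u).
Proof.
elim: X => [|p X IH] Hu /=.
  by apply: wspace_pair Hu => k; apply: eq_bigr => j _; rewrite /cnt /= addr0.
eapply shift_up; last exact: (IH Hu).
move=> k; rewrite (@pairing_shift (fun j => b j + (cnt X j)%:R) _ p.1 1) ?mulr1 // => j.
by rewrite /cnt /= natrD mul1r eq_sym addrCA addrA [_ + (_ == _)%:R]addrC addrA.
Qed.

Lemma sum_cnt X : (\sum_(j : I) cnt X j)%N = size X.
Proof.
elim: X => [|p X IH]; first by rewrite big1.
rewrite /cnt /= big_split /= -/(cnt X) IH (bigD1 p.1) //= eqxx big1 // => j.
by rewrite eq_sym => /negPf ->.
Qed.

Section Top2.
Variable lam : I -> C.
Hypothesis Hbound : forall b, is_weight B m xi b ->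
         exists n : I -> nat, forall j, b j = lam j - (n j)%:R.

Lemma bound_one (b : I -> C) (n : I -> nat) x X :
  (forall j, b j = lam j - (n j)%:R) -> wspace B m xi b x ->
  app X x != 0 -> (size X <= \sum_(j : I) n j)%N.
Proof.
move=> Hb Hx Hne.
have [n' Hn'] := Hbound (ex_intro2 _ _ (app X x) Hne (app_weight X Hx)).
rewrite -sum_cnt; apply: leq_sum => j _.
have : ((n' j + cnt X j)%:R : C) = (n j)%:R.
  apply/eqP; rewrite -subr_eq0.
  have -> : ((n' j + cnt X j)%:R - (n j)%:R : C) =
     (b j + (cnt X j)%:R - (lam j - (n' j)%:R)) - (b j - (lam j - (n j)%:R)).
    by rewrite natrD; ring.
  by rewrite -Hn' /= -Hb !subrr.
by move/eqP; rewrite eqr_nat => /eqP <-; rewrite leq_addl.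
Qed.

Lemma bound (Hwm : weight_module B m xi) w :
  exists N, forall X, (N < size X)%N -> app X w = 0.
Proof.
have [s [Hs ->]] := Hwm w.
elim: s Hs => [|[b x] s IH] /= Hs.
  by exists 0%N => X _; rewrite big_nil app0.
have [Hx /IH [N1 HN1]] := Hs.
case: (eqVneq x 0) => Hx0.
  by exists N1 => X HX; rewrite big_cons appD HN1 // Hx0 app0 add0r.
have [n Hn] := Hbound (ex_intro2 _ _ x Hx0 Hx).
exists (maxn N1 (\sum_(j : I) n j)) => X HX.
rewrite big_cons appD HN1 ?addr0; last by apply: leq_ltn_trans HX; rewrite leq_maxl.
apply/eqP; apply: contraT => Hne.
have := bound_one Hn Hx Hne.
by rewrite leqNgt (leq_ltn_trans _ HX) // leq_maxr.
Qed.

End Top2.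


Lemma dir2 lam (Hbound : forall b, is_weight B m xi b ->
         exists n : I -> nat, forall j, b j = lam j - (n j)%:R)
  (Hwm : weight_module B m xi) u0
  (Hspan : forall v, wspace B m xi lam v -> exists c : C, v = c *: u0)
  (Hker : forall v, (forall i n, xp i n v = 0) -> wspace B m xi lam v) W :
  submodule xp xm xi W -> (exists2 w, w != 0 & W w) ->
  forall v, wspace B m xi lam v -> W v.
Proof.
move=> [W0 WD WZ WX] [w Hw0 HWw] v Hv.
have [N HN] := bound Hbound Hwm w.
have Hk : forall k X, (N < size X + k)%N -> app X w != 0 ->
    exists Y, app Y w != 0 /\ forall i n, xp i n (app Y w) = 0.
  elim=> [|k IH] X HX HXw.
    by rewrite addn0 in HX; rewrite HN ?eqxx in HXw.
  case: (classic (exists i n, xp i n (app X w) != 0)) => [[i [n Hne]]|Hno].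
    by apply: (IH ((i, n) :: X)) => //=; rewrite addSnnS.
  exists X; split => // i n; apply/eqP; apply: contraT => h.
  by case: Hno; exists i, n.
have [Y [HY0 HYk]] := Hk N.+1 [::] (ltnSn _) Hw0.
have HWY : W (app Y w).
  by elim: (Y) => //= p Y' IH; apply: (proj1 (proj1 (WX _ IH) p.1 p.2)).
have [c Hc] := Hspan _ (Hker _ HYk).
have Hc0 : c != 0 by apply: contraNneq HY0 => Hc0; rewrite Hc Hc0 scale0r.
have Hu0W : W u0.
  by rewrite -[u0]scale1r -(mulVf Hc0) -scalerA -Hc; apply: WZ.
by have [c' ->] := Hspan _ Hv; apply: WZ.
Qed.

Lemma main_gen lam
  (Hpd : forall x : I -> rat, (exists i, x i != 0) ->
         0 < \sum_(i : I) \sum_(j : I) x i * (B i j)%:~R * x j)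
  (Htop : top_graded_at B m xi lam) :
  co_highest_lweight B m xp xm xi <->
  forall v : V, wspace B m xi lam v <-> (forall (i : I) (n : nat), xp i n v = 0).
Proof.
have [Hwm Hbound [u0 [Hu0 Hu0w] Hspan]] := Htop.
split.
- move=> [lam' [[Hwm' Hbound' [u1 [Hu1 Hu1w] Hspan']] Hco]].
  have Heq : forall j, lam' j = lam j.
    move=> j.
    have [n Hn] := Hbound' _ (ex_intro2 _ _ u0 Hu0 Hu0w).
    have [n' Hn'] := Hbound _ (ex_intro2 _ _ u1 Hu1 Hu1w).
    have : ((n j + n' j)%:R : C) = 0.
      have -> : ((n j + n' j)%:R : C) =
        - ((lam' j - (n j)%:R - lam j) + (lam j - (n' j)%:R - lam' j)).
        by rewrite natrD; ring.
      by rewrite -Hn -Hn' !subrr addr0 oppr0.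
    move/eqP; rewrite pnatr_eq0 addn_eq0 => /andP[/eqP Hn0 _].
    by rewrite Hn Hn0 subr0.
  have Hpeq : forall k, pairing B k lam' = pairing B k lam.
    by move=> k; apply: eq_bigr => j _; rewrite Heq.
  move=> v; split; first by move=> Hv i n; apply: (topB Hbound).
  move=> Hv; apply: (wspace_pair Hpeq).
  exact: (dir1 Hbound' Hpd Hwm Hu1 Hu1w Hco Hv).
- move=> Hiff; exists lam; split => // W HW HWn v Hv.
  exact: (dir2 Hbound Hwm Hspan (fun v H => (proj2 (Hiff v)) H) HW HWn Hv).
Qed.

End Gen.

Theorem lemma4p6 (R : realType) (I : finType) (d : I -> nat)
    (B : I -> I -> int) (m : I -> int) (V : lmodType R[i])
    (xp xm : I -> nat -> {linear V -> V}) (xi : I -> int -> {linear V -> V})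
    (lam : I -> R[i]) :
  simple_cartan_datum d B ->
  Ymu_module d B m xp xm xi ->
  top_graded_at B m xi lam ->
  (co_highest_lweight B m xp xm xi <->
   forall v : V, wspace B m xi lam v <-> (forall (i : I) (n : nat), xp i n v = 0)).
Proof.
move=> [_ [_ _ Hpd _]] [[Hxixi Hpm] [[Hxip Hxim] [_ _ _ Hnorm]]] Htop.
refine (main_gen Hxixi Hxip Hxim Hnorm Hpm Hpd Htop).
Qed.
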